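(* Let $P\subset\mathbb{R}^D$ be an $(\epsilon_1,\epsilon_2)$-significant instance of $k$-center clustering with $z$ outliers, $|P|=n$, and let $\eta\in(0,1)$. Consider the following algorithm: (1) sample a set $S$ of $\frac{k}{\epsilon_1}\log\frac{k}{\eta}$ points uniformly at random from $P$; (2) let $k'=\frac{1}{\eta}\frac{\epsilon_2}{k}|S|$ and run Gonzalez's algorithm for $(k+k')$-center clustering on $S$; output the set $H$ of $k+k'$ centers it returns. Then $|H|=k+\frac{1}{\eta}\frac{\epsilon_2}{\epsilon_1}\log\frac{k}{\eta}$, and with probability at least $(1-\eta)^2$, $\Delta^{-z}_{\infty}(P,H)\le 4r_{opt}$.
   Context: For a finite $H\subset\mathbb{R}^D$ and a point $p$, $dist(p,H)=\min_{q\in H}\|p-q\|$. For an integer $0<z<n$, $\Delta^{-z}_{\infty}(P,H)=\min\{\max_{p\in P'}dist(p,H): P'\subset P, |P'|=n-z\}$. The $k$-center clustering with $z$ outliers problem asks for $k$ centers $C\subset\mathbb{R}^D$ minimizing $\Delta^{-z}_{\infty}(P,C)$; $r_{opt}$ denotes this optimal value. $P_{opt}\subset P$ with $|P_{opt}|=n-z$ denotes the set of inliers of an optimal solution, and $C^*_1,\dots,C^*_k$ are the optimal clusters forming $P_{opt}$ (each point of $P_{opt}$ assigned to its nearest optimal center). The instance is $(\epsilon_1,\epsilon_2)$-significant ($\epsilon_1,\epsilon_2>0$) if $\min_{1\le j\le k}|C^*_j|\ge\frac{\epsilon_1}{k}n$ and $z=\frac{\epsilon_2}{k}n$. Sampling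 uniformly at random means each sample point is drawn independently and uniformly from $P$. Gonzalez's algorithm for $m$-center clustering on $S$: pick an arbitrary point of $S$ as the first center, then repeatedly add as a new center the point of $S$ farthest from the current centers, until $m$ centers are chosen; it is a 2-approximation, i.e., all of $S$ is covered by balls of radius at most twice the optimal $m$-center radius of $S$ around the returned centers. *)

(* Defs.v *)
From mathcomp Require Import all_boot all_order all_algebra.
From mathcomp Require Import reals exp.
Set Implicit Arguments. Unset Strict Implicit. Unset Printing Implicit Defensive.
Import Order.TTheory GRing.Theory Num.Theory.
Local Open Scope ring_scope.

Section KCenterDefs.
Variable R : realType.
Variable D : nat.

Definition enorm (v : 'rV[R]_D) : R := Num.sqrt (\sum_(i < D) v ord0 i ^+ 2).
Definition edist (p q : 'rV[R]_D) : R := enorm (p - q).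

(* dist(p,H) = min_{q in H} ||p - q||, for a finite nonempty H (given as a
   sequence; the identity element (head of H) is itself an element of H, so
   this is exactly the minimum when H is nonempty). *)
Definition dist_set (p : 'rV[R]_D) (H : seq 'rV[R]_D) : R :=
  \big[Num.min/edist p (head p H)]_(q <- H) edist p q.

Variable n : nat.

(* max_{p in A} dist(p,H), for A a set of indices of points of P
   (distances are >= 0, so 0 is a neutral element). *)
Definition max_dist (P : 'I_n -> 'rV[R]_D) (H : seq 'rV[R]_D) (A : {set 'I_n}) : R :=
  \big[Num.max/0]_(i in A) dist_set (P i) H.

(* The neutral element max_dist P H setT is an upper bound of every candidate
   (max over a superset), so this is exactly the minimum over the (nonempty,
   as z <= n) family of subsets of size n - z. *)
Definition cost_out (P : 'I_n -> 'rV[R]_D) (z : nat) (H : seq 'rV[R]_D) : R :=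
  \big[Num.min/max_dist P H setT]_(A : {set 'I_n} | #|A| == (n - z)%N) max_dist P H A.

Definition kcenter_opt (k : nat) (P : 'I_n -> 'rV[R]_D) (z : nat)
    (C : 'I_k -> 'rV[R]_D) : Prop :=
  injective C /\
  forall C' : 'I_k -> 'rV[R]_D, injective C' ->
    cost_out P z (codom C) <= cost_out P z (codom C').

Definition significant (k : nat) (P : 'I_n -> 'rV[R]_D) (z : nat) (e1 e2 : R)
    (C : 'I_k -> 'rV[R]_D) : Prop :=
  kcenter_opt P z C /\
  z%:R = e2 / k%:R * n%:R /\
  exists Popt : {set 'I_n},
    #|Popt| = (n - z)%N /\
    max_dist P (codom C) Popt = cost_out P z (codom C) /\
    exists sigma : 'I_n -> 'I_k,
      (forall i, i \in Popt -> edist (P i) (C (sigma i)) = dist_set (P i) (codom C)) /\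
      (forall j : 'I_k, e1 / k%:R * n%:R <= #|[set i in Popt | sigma i == j]|%:R).

Definition gonzalez_run (S : seq 'rV[R]_D) (M : nat) (H : seq 'rV[R]_D) : Prop :=
  size H = M /\
  (forall i, (i < M)%N -> nth 0 H i \in S) /\
  (forall i, (0 < i < M)%N -> forall s, s \in S ->
     dist_set s (take i H) <= dist_set (nth 0 H i) (take i H)).

Definition sample (m : nat) (P : 'I_n -> 'rV[R]_D) (s : {ffun 'I_m -> 'I_n}) : seq 'rV[R]_D :=
  [seq P (s j) | j <- enum 'I_m].

(* m independent uniform draws from P: each outcome s has probability 1/n^m. *)
Definition unif_prob (m : nat) (E : pred {ffun 'I_m -> 'I_n}) : R :=
  #|[pred s | E s]|%:R / (n ^ m)%:R.

End KCenterDefs.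
Arguments unif_prob {R n m} E.

(* Main.v *)
Require Import Defs.
From mathcomp Require Import all_boot all_order all_algebra.
From mathcomp Require Import reals exp.
From mathcomp Require Import sequences.
From mathcomp Require Import ring lra.
Import Order.TTheory GRing.Theory Num.Theory.
Local Open Scope ring_scope.

Section Ffun.
Variable (R : realType) (T : finType).

Definition fcons m (v : T) (s : {ffun 'I_m -> T}) : {ffun 'I_m.+1 -> T} :=
  [ffun i => if unlift ord0 i is Some j then s j else v].
Arguments fcons {m}.

Lemma fcons0 m v s : @fcons m v s ord0 = v.
Proof. by rewrite ffunE unlift_none. Qed.
Lemma fconsS m v s j : @fcons m v s (lift ord0 j) = s j.
Proof. by rewrite ffunE liftK. Qed.

Lemma sum_ffunS m (F : {ffun 'I_m.+1 -> T} -> R) :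
  \sum_s F s = \sum_(v : T) \sum_(s : {ffun 'I_m -> T}) F (fcons v s).
Proof.
rewrite pair_big /=.
pose g (s : {ffun 'I_m.+1 -> T}) := (s ord0, [ffun j => s (lift ord0 j)]).
rewrite (reindex (fun p : T * {ffun 'I_m -> T} => fcons p.1 p.2)) //=.
exists g => [[v s] _|s _]; rewrite /g /=.
  by rewrite fcons0; congr pair; apply/ffunP => j; rewrite ffunE fconsS.
apply/ffunP => i; rewrite ffunE; case: unliftP => [j ->|->]; by rewrite ?ffunE.
Qed.

Lemma sum_ffun0 (F : {ffun 'I_0 -> T} -> R) s0 : \sum_s F s = F s0.
Proof.
rewrite (eq_bigr (fun _ => F s0)) => [|s _].
  by rewrite sumr_const card_ffun card_ord expn0.
by congr F; apply/ffunP => -[i Hi]; exfalso; rewrite ltn0 in Hi.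
Qed.

Lemma exists_fcons m v s (p : pred T) :
  [exists t, p (@fcons m v s t)] = p v || [exists t, p (s t)].
Proof.
apply/existsP/orP => [[t]|[Hv|/existsP[t Ht]]].
- case: (unliftP ord0 t) => [j ->|->]; rewrite ?fconsS ?fcons0 => H.
    by right; apply/existsP; exists j.
  by left.
- by exists ord0; rewrite fcons0.
- by exists (lift ord0 t); rewrite fconsS.
Qed.

Lemma forall_fcons m v s (p : pred T) :
  [forall t, p (@fcons m v s t)] = p v && [forall t, p (s t)].
Proof.
apply/forallP/andP => [H|[Hv /forallP H] t].
  split; first by have := H ord0; rewrite fcons0.
  by apply/forallP => t; have := H (lift ord0 t); rewrite fconsS.
by case: (unliftP ord0 t) => [j ->|->]; rewrite ?fconsS ?fcons0.
Qed.

Lemma sum_card (I : finType) (b : pred I) :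
  \sum_i (b i)%:R = #|[pred i | b i]|%:R :> R.
Proof.
rewrite -sum1_card natr_sum [RHS]big_mkcond /=; apply: eq_bigr => i _.
by rewrite inE; case: (b i).
Qed.

Lemma cheb (I : finType) (f g : I -> R) :
  (forall i j, 0 <= (f i - f j) * (g i - g j)) ->
  (\sum_i f i) * (\sum_i g i) <= #|I|%:R * \sum_i f i * g i.
Proof.
move=> H.
have H0 : 0 <= \sum_i \sum_j (f i - f j) * (g i - g j).
  by apply: sumr_ge0 => i _; apply: sumr_ge0 => j _; apply: H.
have e1 : \sum_(i : I) \sum_(j : I) f i * g i = #|I|%:R * \sum_i f i * g i.
  under eq_bigr do rewrite sumr_const.
  by rewrite sumrMnl mulr_natl.
have e2 : \sum_(i : I) \sum_(j : I) f j * g j = #|I|%:R * \sum_i f i * g i.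
  by rewrite sumr_const mulr_natl.
have e3 : \sum_(i : I) \sum_(j : I) f i * g j = (\sum_i f i) * (\sum_i g i).
  by rewrite mulr_suml; apply: eq_bigr => i _; rewrite mulr_sumr.
have e4 : \sum_(i : I) \sum_(j : I) f j * g i = (\sum_i f i) * (\sum_i g i).
  by rewrite exchange_big /= mulr_suml; apply: eq_bigr => i _; rewrite mulr_sumr.
have E : \sum_i \sum_j (f i - f j) * (g i - g j) =
  \sum_(i : I) \sum_(j : I) f i * g i + \sum_(i : I) \sum_(j : I) f j * g j
  - \sum_(i : I) \sum_(j : I) f i * g j - \sum_(i : I) \sum_(j : I) f j * g i.
  rewrite -big_split -!sumrB /=; apply: eq_bigr => i _.
  rewrite -big_split -!sumrB /=; apply: eq_bigr => j _.
  ring.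
rewrite E e1 e2 e3 e4 in H0.
lra.
Qed.
End Ffun.
Arguments fcons {T m}.

Section Count.
Variables (R : realType) (n k : nat) (Popt : {set 'I_n}) (sig : 'I_n -> 'I_k).

Definition cov m (A : {set 'I_k}) (s : {ffun 'I_m -> 'I_n}) : bool :=
  [forall j, (j \in A) || [exists t, (s t \in Popt) && (sig (s t) == j)]].
Definition nout m (s : {ffun 'I_m -> 'I_n}) : nat :=
  count (fun t => s t \notin Popt) (enum 'I_m).
Definition addA (A : {set 'I_k}) v := if v \in Popt then sig v |: A else A.
Definition cnt m (b : pred {ffun 'I_m -> 'I_n}) : R := \sum_s (b s)%:R.
Definition N : R := n%:R.
Arguments cov {m}. Arguments nout {m}. Arguments cnt {m}.

Lemma nout_fcons m v s : nout (@fcons _ m v s) = ((v \notin Popt) + nout s)%N.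
Proof.
rewrite /nout enum_ordSl /= fcons0 count_map; congr addn.
by apply: eq_count => t /=; rewrite fconsS.
Qed.

Lemma cov_fcons m A v s : cov A (@fcons _ m v s) = cov (addA A v) s.
Proof.
rewrite /cov; apply: eq_forallb => j.
rewrite (exists_fcons _ _ v s (fun x => (x \in Popt) && (sig x == j))) /addA.
case: (v \in Popt) => //=.
by rewrite in_setU1 eq_sym; case: (j == sig v); case: (j \in A).
Qed.

Lemma cnt_le m (b1 b2 : pred {ffun 'I_m -> 'I_n}) :
  (forall s, b1 s -> b2 s) -> cnt b1 <= cnt b2.
Proof.
move=> H; apply: ler_sum => s _.
case E1: (b1 s); first by rewrite (H _ E1).
by rewrite ler0n.
Qed.

Lemma cnt_ext m (b1 b2 : pred {ffun 'I_m -> 'I_n}) :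
  (forall s, b1 s = b2 s) -> cnt b1 = cnt b2.
Proof. by move=> H; apply: eq_bigr => s _; rewrite H. Qed.

Lemma cnt_ge0 m (b : pred {ffun 'I_m -> 'I_n}) : 0 <= cnt b.
Proof. by apply: sumr_ge0 => s _; apply: ler0n. Qed.

Lemma cnt_S m (b : pred {ffun 'I_m.+1 -> 'I_n}) :
  cnt b = \sum_v cnt (fun s => b (fcons v s)).
Proof. by rewrite /cnt sum_ffunS. Qed.

Lemma cnt_true m : cnt (fun _ : {ffun 'I_m -> 'I_n} => true) = N ^+ m.
Proof. by rewrite /cnt sumr_const card_ffun !card_ord -mulr_natr /= mul1r natrX. Qed.

Lemma cnt_compl m (b : pred {ffun 'I_m -> 'I_n}) :
  cnt b + cnt (fun s => ~~ b s) = N ^+ m.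
Proof.
rewrite -cnt_true /cnt -big_split /=; apply: eq_bigr => s _.
by case: (b s); rewrite /= ?addr0 ?add0r.
Qed.

Definition s0 : {ffun 'I_0 -> 'I_n} := [ffun i => widen_ord (leq0n n) i].

Lemma fkg m K : forall A c,
  cnt (@cov m A) * cnt (fun s : {ffun 'I_m -> 'I_n} => c + nout s <= K)%N <=
  N ^+ m * cnt (fun s : {ffun 'I_m -> 'I_n} => cov A s && (c + nout s <= K)%N).
Proof.
elim: m => [|m IH] A c.
  rewrite /cnt !(sum_ffun0 _ _ _ s0) expr0 mul1r.
  by case: (cov A s0); case: (_ <= K)%N; rewrite /= ?mul1r ?mul0r ?mulr0.
rewrite !cnt_S.
have e1 (v : 'I_n) : cnt (fun s : {ffun 'I_m -> 'I_n} => cov A (fcons v s)) = cnt (@cov m (addA A v)).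
  by apply: cnt_ext => s; rewrite cov_fcons.
have e2 (v : 'I_n) : cnt (fun s : {ffun 'I_m -> 'I_n} => c + nout (fcons v s) <= K)%N =
   cnt (fun s : {ffun 'I_m -> 'I_n} => c + (v \notin Popt) + nout s <= K)%N.
  by apply: cnt_ext => s; rewrite nout_fcons addnA.
have e3 (v : 'I_n) : cnt (fun s : {ffun 'I_m -> 'I_n} => cov A (fcons v s) && (c + nout (fcons v s) <= K))%N =
   cnt (fun s : {ffun 'I_m -> 'I_n} => cov (addA A v) s && (c + (v \notin Popt) + nout s <= K))%N.
  by apply: cnt_ext => s; rewrite cov_fcons nout_fcons addnA.
under eq_bigr do rewrite e1.
under [X in _ * X]eq_bigr do rewrite e2.
under [X in _ <= _ * X]eq_bigr do rewrite e3.
apply: (le_trans (@cheb _ _ (fun v : 'I_n => @cnt m (cov (addA A v)))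
  (fun v => cnt (fun s : {ffun 'I_m -> 'I_n} => (c + (v \notin Popt) + nout s <= K)%N)) _)).
  move=> v w; rewrite /addA.
  case: (v \in Popt); case: (w \in Popt); rewrite /= ?addn0 ?subrr ?mulr0 ?mul0r //.
  - rewrite mulr_ge0 // subr_ge0.
      by apply: cnt_le => s; rewrite /cov => /forallP H; apply/forallP => j;
         have := H j; case/orP => [Hj|->]; rewrite ?orbT // setU1r.
    by apply: cnt_le => s; rewrite addn1 => /ltnW.
  - rewrite mulr_le0 // subr_le0.
      by apply: cnt_le => s; rewrite /cov => /forallP H; apply/forallP => j;
         have := H j; case/orP => [Hj|->]; rewrite ?orbT // setU1r.
    by apply: cnt_le => s; rewrite addn1 => /ltnW.
rewrite card_ord exprS -mulrA ler_wpM2l ?ler0n // mulr_sumr.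
apply: ler_sum => v _; exact: IH.
Qed.

Lemma cnt_all m (B : {set 'I_n}) :
  cnt (fun s : {ffun 'I_m -> 'I_n} => [forall t, s t \in B]) = #|B|%:R ^+ m.
Proof.
elim: m => [|m IH].
  rewrite /cnt (sum_ffun0 _ _ _ s0) expr0.
  by have -> : [forall t, s0 t \in B] by apply/forallP => -[].
rewrite cnt_S.
have e1 (v : 'I_n) : cnt (fun s : {ffun 'I_m -> 'I_n} => [forall t, fcons v s t \in B]) =
   cnt (fun s : {ffun 'I_m -> 'I_n} => (v \in B) && [forall t, s t \in B]).
  by apply: cnt_ext => s; rewrite (forall_fcons _ _ _ _ (fun x => x \in B)).
under eq_bigr do rewrite e1.
rewrite exprS.
transitivity (\sum_v (v \in B)%:R * (#|B|%:R ^+ m : R)).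
  apply: eq_bigr => v _; case: (v \in B); rewrite ?mul1r ?mul0r -?IH //.
  by rewrite /cnt big1 // => s _.
by rewrite -mulr_suml sum_card; congr (_%:R * _); apply: eq_card => v; rewrite inE.
Qed.

Lemma sum_nout m :
  N * \sum_(s : {ffun 'I_m -> 'I_n}) (nout s)%:R = m%:R * #|~: Popt|%:R * N ^+ m.
Proof.
elim: m => [|m IH].
  by rewrite (sum_ffun0 _ _ _ s0) /nout enum_ord0 /= mulr0 mul0r mul0r.
rewrite sum_ffunS.
under eq_bigr do under eq_bigr do rewrite nout_fcons natrD.
under eq_bigr do rewrite big_split /=.
rewrite big_split /=.
have a1 : \sum_(v < n) \sum_(s : {ffun 'I_m -> 'I_n}) ((v \notin Popt) : nat)%:R
    = #|~: Popt|%:R * N ^+ m.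
  under eq_bigr do rewrite sumr_const card_ffun !card_ord.
  rewrite sumrMnl sum_card -[_ *+ (n ^ m)]mulr_natr natrX; congr (_%:R * _).
  by apply: eq_card => v; rewrite !inE.
have a2 : \sum_(v < n) \sum_(s : {ffun 'I_m -> 'I_n}) (nout s)%:R
    = N * \sum_(s : {ffun 'I_m -> 'I_n}) (nout s)%:R.
  by rewrite sumr_const card_ord mulr_natl.
rewrite a1 a2 mulrDr IH exprS /N; ring.
Qed.

End Count.

Section Metric.
Variable (R : realType).

Lemma cs_ineq (I : finType) (x y : I -> R) :
  (\sum_i x i * y i) ^+ 2 <= (\sum_i x i ^+ 2) * (\sum_i y i ^+ 2).
Proof.
have H0 : 0 <= \sum_i \sum_j (x i * y j - x j * y i) ^+ 2.
  by apply: sumr_ge0 => i _; apply: sumr_ge0 => j _; apply: sqr_ge0.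
have e1 : \sum_(i : I) \sum_(j : I) x i ^+ 2 * y j ^+ 2 =
    (\sum_i x i ^+ 2) * (\sum_i y i ^+ 2).
  by rewrite mulr_suml; apply: eq_bigr => i _; rewrite mulr_sumr.
have e2 : \sum_(i : I) \sum_(j : I) x j ^+ 2 * y i ^+ 2 =
    (\sum_i x i ^+ 2) * (\sum_i y i ^+ 2).
  by rewrite exchange_big /= mulr_suml; apply: eq_bigr => i _; rewrite mulr_sumr.
have e3 : \sum_(i : I) \sum_(j : I) (x i * y i) * (x j * y j) =
    (\sum_i x i * y i) ^+ 2.
  by rewrite expr2 mulr_suml; apply: eq_bigr => i _; rewrite mulr_sumr.
have E : \sum_i \sum_j (x i * y j - x j * y i) ^+ 2 =
   \sum_(i : I) \sum_(j : I) x i ^+ 2 * y j ^+ 2 +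
   \sum_(i : I) \sum_(j : I) x j ^+ 2 * y i ^+ 2 -
   (\sum_(i : I) \sum_(j : I) (x i * y i) * (x j * y j)) *+ 2.
  rewrite -sumrMnl -big_split -!sumrB /=; apply: eq_bigr => i _.
  rewrite -sumrMnl -big_split -!sumrB /=; apply: eq_bigr => j _.
  ring.
rewrite E e1 e2 e3 in H0.
lra.
Qed.

Lemma minkowski (I : finType) (x y : I -> R) :
  Num.sqrt (\sum_i (x i + y i) ^+ 2) <=
  Num.sqrt (\sum_i x i ^+ 2) + Num.sqrt (\sum_i y i ^+ 2).
Proof.
set X := \sum_i x i ^+ 2; set Y := \sum_i y i ^+ 2.
have X0 : 0 <= X by apply: sumr_ge0 => i _; apply: sqr_ge0.
have Y0 : 0 <= Y by apply: sumr_ge0 => i _; apply: sqr_ge0.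
have cs : \sum_i x i * y i <= Num.sqrt X * Num.sqrt Y.
  rewrite -sqrtrM //.
  apply: (le_trans (ler_norm _)).
  rewrite -sqrtr_sqr ler_sqrt; last by rewrite mulr_ge0.
  exact: cs_ineq.
have t0 : 0 <= Num.sqrt X + Num.sqrt Y by rewrite addr_ge0 ?sqrtr_ge0.
rewrite -[X in _ <= X]ger0_norm // -sqrtr_sqr ler_sqrt; last by apply: sqr_ge0.
have -> : \sum_i (x i + y i) ^+ 2 = X + Y + (\sum_i x i * y i) *+ 2.
  rewrite /X /Y -big_split -sumrMnl -big_split /=; apply: eq_bigr => i _; ring.
rewrite sqrrD !sqr_sqrtr //.
lra.
Qed.

Variable D : nat.
Implicit Types p q : 'rV[R]_D.

Lemma enorm_ge0 (v : 'rV[R]_D) : 0 <= enorm v.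
Proof. exact: sqrtr_ge0. Qed.

Lemma edist_ge0 p q : 0 <= edist p q.
Proof. exact: enorm_ge0. Qed.

Lemma edist_sym p q : edist p q = edist q p.
Proof.
rewrite /edist /enorm; congr Num.sqrt; apply: eq_bigr => i _; rewrite !mxE; ring.
Qed.

Lemma edist_refl p : edist p p = 0.
Proof.
rewrite /edist /enorm big1 ?sqrtr0 // => i _; rewrite !mxE subrr expr0n //.
Qed.

Lemma edist_tri p q r : edist p r <= edist p q + edist q r.
Proof.
rewrite /edist /enorm.
have -> : \sum_(i < D) (p - r) ord0 i ^+ 2 =
  \sum_(i < D) ((p - q) ord0 i + (q - r) ord0 i) ^+ 2.
  by apply: eq_bigr => i _; rewrite !mxE; congr (_ ^+ 2); ring.
exact: minkowski.
Qed.

Lemma my_bigmin_le (I : eqType) (r : seq I) (P : pred I) (F : I -> R) x0 i :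
  i \in r -> P i -> \big[Num.min/x0]_(j <- r | P j) F j <= F i.
Proof.
elim: r => // a r IH; rewrite in_cons big_cons => /orP [/eqP <-|Hi] Pi.
  by rewrite Pi ge_min lexx.
case: (P a); last exact: IH.
by rewrite ge_min IH ?orbT.
Qed.

Lemma my_le_bigmin (I : eqType) (r : seq I) (P : pred I) (F : I -> R) x0 y :
  y <= x0 -> (forall i, i \in r -> P i -> y <= F i) ->
  y <= \big[Num.min/x0]_(j <- r | P j) F j.
Proof.
move=> H0; elim: r => [|a r IH] H; rewrite ?big_nil ?big_cons //.
have IH' : y <= \big[Num.min/x0]_(j <- r | P j) F j.
  by apply: IH => i Hi; apply: H; rewrite in_cons Hi orbT.
case Pa: (P a) => //.
by rewrite le_min IH' H ?in_cons ?eqxx.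
Qed.

Lemma my_le_bigmax (I : eqType) (r : seq I) (P : pred I) (F : I -> R) x0 i :
  i \in r -> P i -> F i <= \big[Num.max/x0]_(j <- r | P j) F j.
Proof.
elim: r => // a r IH; rewrite in_cons big_cons => /orP [/eqP <-|Hi] Pi.
  by rewrite Pi le_max lexx.
case: (P a); last exact: IH.
by rewrite le_max IH ?orbT.
Qed.

Lemma my_bigmax_le (I : Type) (r : seq I) (P : pred I) (F : I -> R) x0 y :
  x0 <= y -> (forall i, P i -> F i <= y) ->
  \big[Num.max/x0]_(j <- r | P j) F j <= y.
Proof.
move=> H0 H; elim/big_ind: _ => // a b Ha Hb.
by rewrite ge_max Ha Hb.
Qed.

Lemma dist_set_le p H h : h \in H -> dist_set p H <= edist p h.
Proof. by move=> Hh; rewrite /dist_set; apply: my_bigmin_le. Qed.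

Lemma le_dist_set p H y : H != [::] -> (forall h, h \in H -> y <= edist p h) ->
  y <= dist_set p H.
Proof.
case: H => // a H _ Hy; rewrite /dist_set; apply: my_le_bigmin => /=.
  by apply: Hy; rewrite mem_head.
by move=> i Hi _; apply: Hy.
Qed.

Lemma dist_set_tri p q H : H != [::] -> dist_set p H <= edist p q + dist_set q H.
Proof.
move=> HH.
have: dist_set p H - edist p q <= dist_set q H.
  apply: le_dist_set => // h Hh.
  have := @dist_set_le p H h Hh; have := edist_tri p q h; lra.
lra.
Qed.

Lemma gonz (S : seq 'rV[R]_D) M H r (Q : seq 'rV[R]_D) :
  gonzalez_run S M H -> (size Q <= M)%N ->
  (forall x, x \in S -> exists2 q, q \in Q & edist x q <= r) ->
  forall x, x \in S -> dist_set x H <= 2 * r.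
Proof.
move=> [sH [inS gr]] sQ cover x xS.
rewrite leNgt; apply/negP => Hlt.
pose L := x :: H.
have gS : forall a, (a < M.+1)%N -> nth 0 L a \in S.
  by case=> [|a] Ha //=; apply: inS.
have sep : forall a b, (a < b)%N -> (b < M.+1)%N ->
    2 * r < edist (nth 0 L a) (nth 0 L b).
  move=> a b ab bM; rewrite /L.
  case: b ab bM => // b ab bM /=.
  have bM' : (b < M)%N := bM.
  have hb : nth 0 H b \in H by rewrite mem_nth // sH.
  case: a ab => [|a] ab /=.
    exact: (lt_le_trans Hlt (@dist_set_le x H _ hb)).
  have ab' : (a < b)%N := ab.
  have b0 : (0 < b)%N := leq_ltn_trans (leq0n a) ab'.
  have ha : nth 0 H a \in take b H.
    by rewrite -(nth_take 0 ab') mem_nth // size_take sH bM'.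
  have t1 : dist_set x H <= dist_set x (take b H).
    apply: le_dist_set.
      by rewrite -size_eq0 size_take sH bM' -lt0n.
    by move=> h hin; apply: dist_set_le; exact: mem_take hin.
  have t2 : dist_set x (take b H) <= dist_set (nth 0 H b) (take b H).
    by apply: gr => //; rewrite b0 bM'.
  have t3 := @dist_set_le (nth 0 H b) _ _ ha.
  rewrite edist_sym.
  apply: (lt_le_trans Hlt); apply: (le_trans t1); apply: (le_trans t2); exact: t3.
pose f a := nth 0 Q (find (fun q => edist (nth 0 L a) q <= r) Q).
have fP : forall a, (a < M.+1)%N -> f a \in Q /\ edist (nth 0 L a) (f a) <= r.
  move=> a Ha; have [q qQ Hq] := cover _ (gS a Ha).
  have hs : has (fun q => edist (nth 0 L a) q <= r) Q by apply/hasP; exists q.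
  split; first by rewrite /f mem_nth // -has_find.
  exact: (nth_find 0 hs).
have inj : {in iota 0 M.+1 &, injective f}.
  move=> a b; rewrite !mem_iota !add0n /= => Ha Hb fab.
  have [h1 h2] := fP a Ha; have [h3 h4] := fP b Hb.
  case: (ltngtP a b) => // [ab|ba]; exfalso.
  - have := sep a b ab Hb; have := edist_tri (nth 0 L a) (f b) (nth 0 L b).
    rewrite fab in h2; rewrite (edist_sym (f b)); lra.
  - have := sep b a ba Ha; have := edist_tri (nth 0 L b) (f a) (nth 0 L a).
    rewrite -fab in h4; rewrite (edist_sym (f a)); lra.
have U : uniq (map f (iota 0 M.+1)) by rewrite (map_inj_in_uniq inj) iota_uniq.
have Sub : {subset map f (iota 0 M.+1) <= Q}.
  by move=> q /mapP [a Ha ->]; rewrite mem_iota in Ha; exact: (fP a Ha).1.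
have := uniq_leq_size U Sub; rewrite size_map size_iota => HM.
by have := leq_trans HM sQ; rewrite ltnn.
Qed.

End Metric.

Lemma miss_bound (R : realType) (Nn c e1 eta kk : R) (m : nat) :
  0 < Nn -> 0 <= c -> c <= Nn -> 0 < e1 -> 0 < eta -> 0 < kk ->
  e1 / kk * Nn <= c -> kk / e1 * ln (kk / eta) <= m%:R ->
  (Nn - c) ^+ m <= eta / kk * Nn ^+ m.
Proof.
move=> N0 c0 cN e0 et0 k0 hc hm.
set y := c / Nn.
have y0 : 0 <= y by rewrite divr_ge0 // ltW.
have y1 : y <= 1 by rewrite ler_pdivrMr // mul1r.
have ey : e1 / kk <= y by rewrite ler_pdivlMr.
have -> : Nn - c = Nn * (1 - y) by rewrite /y mulrBr mulr1 mulrC divfK ?gt_eqF.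
rewrite exprMn mulrC; apply: ler_wpM2r; first by rewrite exprn_ge0 // ltW.
have h1 : (1 - y) ^+ m <= expR (- y) ^+ m.
  apply: lerXn2r; rewrite ?nnegrE ?subr_ge0 ?expR_ge0 //.
  by have := expR_ge1Dx (- y); rewrite addrC.
apply: (le_trans h1); rewrite -expRM_natr.
have kpos : 0 < kk / eta by rewrite divr_gt0.
have -> : eta / kk = expR (- ln (kk / eta)).
  by rewrite expRN lnK ?posrE // invf_div.
rewrite ler_expR mulNr lerN2.
have ek : 0 <= e1 / kk by rewrite ltW // divr_gt0.
have h2 : e1 / kk * (kk / e1 * ln (kk / eta)) <= e1 / kk * m%:R by rewrite ler_wpM2l.
have h3 : e1 / kk * m%:R <= y * m%:R by rewrite ler_wpM2r.
have h4 : e1 / kk * (kk / e1 * ln (kk / eta)) = ln (kk / eta).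
  by field; rewrite ?gt_eqF.
lra.
Qed.

Lemma det (R : realType) (D n k z m k' : nat) (P : 'I_n -> 'rV[R]_D)
  (C : 'I_k -> 'rV[R]_D) (Popt : {set 'I_n}) (sig : 'I_n -> 'I_k)
  (H : seq 'rV[R]_D) (s : {ffun 'I_m -> 'I_n}) :
  (0 < k)%N -> #|Popt| = (n - z)%N ->
  (forall i, i \in Popt -> edist (P i) (C (sig i)) = dist_set (P i) (codom C)) ->
  gonzalez_run (sample P s) (k + k') H ->
  cov n k Popt sig m set0 s -> (nout n Popt m s <= k')%N ->
  cost_out P z H <= 4 * max_dist P (codom C) Popt.
Proof.
move=> k0 cP sigP grun cv no.
have [sH [inS gr]] := grun.
set r := max_dist P (codom C) Popt.
have dge0 : forall p (H' : seq 'rV[R]_D), 0 <= dist_set p H'.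
  move=> p H'; rewrite /dist_set; apply: my_le_bigmin => [|i *]; exact: edist_ge0.
have r0 : 0 <= r.
  rewrite /r /max_dist; elim/big_ind: _ => // x y hx hy.
  by rewrite le_max hx.
have inl : forall i, i \in Popt -> edist (P i) (C (sig i)) <= r.
  move=> i Hi; rewrite sigP // /r /max_dist.
  have := @my_le_bigmax R _ (index_enum 'I_n) (fun j => j \in Popt) (fun j => dist_set (P j) (codom C)) 0 i (mem_index_enum i) Hi. exact.
pose Q := codom C ++ [seq P (s t) | t <- enum 'I_m & s t \notin Popt].
have sQ : (size Q <= k + k')%N.
  by rewrite size_cat size_codom card_ord size_map size_filter leq_add2l.
have cover : forall x, x \in sample P s -> exists2 q, q \in Q & edist x q <= r.
  move=> x /mapP [t _ ->].
  case Ht: (s t \in Popt).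
  - exists (C (sig (s t))); first by rewrite mem_cat codom_f.
    exact: inl.
  - exists (P (s t)); last by rewrite edist_refl.
    rewrite mem_cat; apply/orP; right.
    apply: (map_f (fun t => P (s t))); by rewrite mem_filter Ht mem_enum.
have G := @gonz _ _ _ _ _ r Q grun sQ cover.
have Hne : H != [::].
  apply/eqP => H0; move: sH; rewrite H0 /= => /esym/eqP.
  by rewrite addn_eq0 (negbTE (lt0n_neq0 k0)).
have pt : forall i, i \in Popt -> dist_set (P i) H <= 4 * r.
  move=> i Hi.
  have := (forallP cv) (sig i); rewrite in_set0 /= => /existsP [t /andP [Ht /eqP Hsig]].
  have x1 := inl _ Hi; have x2 := inl _ Ht; rewrite Hsig in x2.
  have x3 : dist_set (P (s t)) H <= 2 * r.
    by apply: G; apply: (map_f (fun j => P (s j))); rewrite mem_enum.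
  have x4 := @dist_set_tri _ _ (P i) (P (s t)) H Hne.
  have x5 := @edist_tri _ _ (P i) (C (sig i)) (P (s t)).
  rewrite (@edist_sym _ _ (C _)) in x5.
  lra.
apply: (@le_trans _ _ (max_dist P H Popt)).
  rewrite /cost_out; apply: my_bigmin_le; first exact: mem_index_enum.
  by rewrite cP.
rewrite /max_dist; apply: my_bigmax_le; first lra.
by move=> i Hi; apply: pt.
Qed.

Theorem theorem1 (R : realType) (D n k z m k' : nat) (P : 'I_n -> 'rV[R]_D)
    (e1 e2 eta : R) (C : 'I_k -> 'rV[R]_D)
    (alg : {ffun 'I_m -> 'I_n} -> seq 'rV[R]_D) :
  injective P -> (0 < k)%N -> (0 < z < n)%N ->
  0 < e1 -> 0 < e2 -> 0 < eta < 1 ->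
  significant P z e1 e2 C ->
  k%:R / e1 * ln (k%:R / eta) <= m%:R ->
  1 / eta * (e2 / k%:R) * m%:R <= k'%:R ->
  (forall s, gonzalez_run (sample P s) (k + k') (alg s)) ->
  (forall s, size (alg s) = (k + k')%N) /\
  (m%:R = k%:R / e1 * ln (k%:R / eta) -> k'%:R = 1 / eta * (e2 / k%:R) * m%:R ->
     forall s, (size (alg s))%:R = k%:R + 1 / eta * (e2 / e1) * ln (k%:R / eta)) /\
  (1 - eta) ^+ 2 <=
    unif_prob (fun s : {ffun 'I_m -> 'I_n} =>
                 cost_out P z (alg s) <= 4 * cost_out P z (codom C)).
Proof.
move=> Pinj k0 /andP[z0 zn] e10 e20 /andP[eta0 eta1]
  [Copt [zdef [Popt [cardP [maxP [sig [sigP clP]]]]]]] hm hk' Hg.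
have sizeH : forall s, size (alg s) = (k + k')%N by move=> s; case: (Hg s).
split; first exact: sizeH.
have kR : (0 : R) < k%:R by rewrite ltr0n.
split.
  move=> Em Ek' s; rewrite sizeH natrD Ek' Em.
  by field; rewrite ?gt_eqF.
have n0 : (0 < n)%N by apply: leq_ltn_trans zn.
have nR : (0 : R) < n%:R by rewrite ltr0n.
set X := N R n ^+ m.
have X0 : 0 < X by rewrite exprn_gt0.
pose G := fun s : {ffun 'I_m -> 'I_n} =>
  cov n k Popt sig m set0 s && (0 + nout n Popt m s <= k')%N.
have HE : cnt R n m G <=
   #|[pred s | cost_out P z (alg s) <= 4 * cost_out P z (codom C)]|%:R.
  rewrite -(sum_card R).
  apply: (@cnt_le R n m G (fun s => cost_out P z (alg s) <= 4 * cost_out P z (codom C))).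
  move=> s /andP [cv no]; rewrite -maxP.
  exact: (@det _ _ _ _ _ _ _ _ _ _ _ _ _ k0 cardP sigP (Hg s) cv no).
rewrite /unif_prob natrX ler_pdivlMr -/(N R n) -/X //.
apply: le_trans HE.
have F1 := fkg R n k Popt sig m k' set0 0.
have F2 : (1 - eta) * X <= cnt R n m (cov n k Popt sig m set0).
  have Hc := cnt_compl R n m (cov n k Popt sig m set0); rewrite -/X in Hc.
  pose cl j := [set i in Popt | sig i == j].
  have Hb : cnt R n m (fun s => ~~ cov n k Popt sig m set0 s) <= eta * X.
    apply: (@le_trans _ _ (\sum_(j < k) cnt R n m (fun s => [forall t, s t \in ~: cl j]))).
      rewrite /cnt exchange_big /=; apply: ler_sum => s _.
      case Hs: (cov n k Popt sig m set0 s) => /=.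
        by apply: sumr_ge0 => j _; apply: ler0n.
      move: Hs; rewrite /cov => /negbT; rewrite negb_forall => /existsP [j].
      rewrite in_set0 /= negb_exists => /forallP Hj.
      rewrite (bigD1 j) //=.
      have -> : [forall t, s t \in ~: cl j] = true.
        by apply/forallP => t; rewrite in_setC inE; exact: Hj t.
      by rewrite lerDl; apply: sumr_ge0 => j' _; apply: ler0n.
    under eq_bigr do rewrite cnt_all.
    apply: (@le_trans _ _ (\sum_(j < k) (eta / k%:R * X))).
      apply: ler_sum => j _.
      have cj := cardsC (cl j); rewrite card_ord in cj.
      have cjR : #|~: cl j|%:R = n%:R - #|cl j|%:R :> R.
        have := f_equal (fun x => x%:R : R) cj; rewrite natrD /= => <-.
        by rewrite addrC addKr.
      rewrite cjR /X /N; apply: (@miss_bound R n%:R #|cl j|%:R e1 eta k%:R m) => //.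
      all: try exact: clP.
      by rewrite ler_nat -[X in (_ <= X)%N]cj leq_addr.
    rewrite sumr_const card_ord -mulr_natr.
    rewrite le_eqVlt; apply/orP; left; apply/eqP.
    by field; rewrite gt_eqF.
  lra.
have F3 : (1 - eta) * X <= cnt R n m (fun s => (0 + nout n Popt m s <= k')%N).
  have Hc := cnt_compl R n m (fun s => (0 + nout n Popt m s <= k')%N); rewrite -/X in Hc.
  set Bad := cnt R n m (fun s => ~~ (0 + nout n Popt m s <= k')%N).
  pose T : R := \sum_(s : {ffun 'I_m -> 'I_n}) (nout n Popt m s)%:R.
  have Mk : k'.+1%:R * Bad <= T.
    rewrite /Bad /cnt /T mulr_sumr; apply: ler_sum => s _.
    case H: (0 + nout n Popt m s <= k')%N => /=.
      by rewrite mulr0 ler0n.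
    by rewrite mulr1 ler_nat ltnNge H.
  have cz : #|~: Popt| = z.
    have := cardsC Popt; rewrite card_ord cardP => H.
    by apply/eqP; rewrite -(eqn_add2l (n - z)) H subnK // ltnW.
  have T_eq : T = e2 / k%:R * m%:R * X.
    apply: (@mulfI _ (n%:R)); first by rewrite gt_eqF.
    have := sum_nout R n Popt m; rewrite /T /N => ->.
    rewrite cz zdef /X /N; ring.
  have q_le : e2 / k%:R * m%:R <= eta * k'%:R.
    have := ler_wpM2l (ltW eta0) hk'.
    have -> : eta * (1 / eta * (e2 / k%:R) * m%:R) = e2 / k%:R * m%:R.
      by field; rewrite !gt_eqF.
    by [].
  have h1 : e2 / k%:R * m%:R * X <= eta * k'%:R * X by rewrite ler_wpM2r // ltW.
  have h2 : k'.+1%:R * Bad <= k'.+1%:R * (eta * X).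
    rewrite -natr1 in Mk *; nra.
  have : Bad <= eta * X by rewrite ler_pM2l ?ltr0n in h2.
  have Hc' : cnt R n m (fun s => (0 + nout n Popt m s <= k')%N) + Bad = X by rewrite -Hc.
  lra.
have H1 : (1 - eta) * X * ((1 - eta) * X) <=
   cnt R n m (cov n k Popt sig m set0) * cnt R n m (fun s => (0 + nout n Popt m s <= k')%N).
  by apply: ler_pM => //; rewrite mulr_ge0 // ?subr_ge0 ltW.
have H2 : X * ((1 - eta) ^+ 2 * X) <= X * cnt R n m G.
  have -> : X * ((1 - eta) ^+ 2 * X) = (1 - eta) * X * ((1 - eta) * X) by ring.
  exact: le_trans H1 F1.
by rewrite ler_pM2l in H2.
Qed.
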